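(* For every power bounded $T\in\mathcal{B}(\mathbb{C}^2)$ of class $C_{11}$, the Cesàro asymptotic limits $A_{T,C}$ and $A_{T^*,C}$ are invertible and $A_{T,C}^{-1}+A_{T^*,C}^{-1}=2I_2$.
   Context: For a power bounded matrix $T$, $A_{T,C}=\lim_{n\to\infty}\frac1n\sum_{j=1}^nT^{*j}T^j$. $\mathcal{H}_0(T)=\{x:\|T^nx\|\to0\}$; $T$ is of class $C_{11}$ if $\mathcal{H}_0(T)=\{0\}$ and $\mathcal{H}_0(T^* )=\{0\}$. *)

(* Defs.v *)
From Stdlib Require Import Reals.
Open Scope R_scope.

Record C := mkC { re : R; im : R }.
Definition C0 : C := mkC 0 0.
Definition C1 : C := mkC 1 0.
Definition Cadd (a b : C) : C := mkC (re a + re b) (im a + im b).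
Definition Copp (a : C) : C := mkC (- re a) (- im a).
Definition Cmul (a b : C) : C :=
  mkC (re a * re b - im a * im b) (re a * im b + im a * re b).
Definition Cconj (a : C) : C := mkC (re a) (- im a).
Definition Cmod (a : C) : R := sqrt (re a * re a + im a * im a).
Definition CofR (r : R) : C := mkC r 0.

Record Vec2 := mkV { v1 : C; v2 : C }.
Definition vnorm (x : Vec2) : R :=
  sqrt (Cmod (v1 x) * Cmod (v1 x) + Cmod (v2 x) * Cmod (v2 x)).
Definition V0 : Vec2 := mkV C0 C0.

Record Mat2 := mkM { m11 : C; m12 : C; m21 : C; m22 : C }.
Definition Mid : Mat2 := mkM C1 C0 C0 C1.
Definition Mzero : Mat2 := mkM C0 C0 C0 C0.
Definition Madd (A B : Mat2) : Mat2 :=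
  mkM (Cadd (m11 A) (m11 B)) (Cadd (m12 A) (m12 B))
      (Cadd (m21 A) (m21 B)) (Cadd (m22 A) (m22 B)).
Definition Mscale (c : C) (A : Mat2) : Mat2 :=
  mkM (Cmul c (m11 A)) (Cmul c (m12 A)) (Cmul c (m21 A)) (Cmul c (m22 A)).
Definition Mmul (A B : Mat2) : Mat2 :=
  mkM (Cadd (Cmul (m11 A) (m11 B)) (Cmul (m12 A) (m21 B)))
      (Cadd (Cmul (m11 A) (m12 B)) (Cmul (m12 A) (m22 B)))
      (Cadd (Cmul (m21 A) (m11 B)) (Cmul (m22 A) (m21 B)))
      (Cadd (Cmul (m21 A) (m12 B)) (Cmul (m22 A) (m22 B))).
Definition Madj (A : Mat2) : Mat2 :=
  mkM (Cconj (m11 A)) (Cconj (m21 A)) (Cconj (m12 A)) (Cconj (m22 A)).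
Fixpoint Mpow (A : Mat2) (n : nat) : Mat2 :=
  match n with O => Mid | S k => Mmul A (Mpow A k) end.
Definition Mapply (A : Mat2) (x : Vec2) : Vec2 :=
  mkV (Cadd (Cmul (m11 A) (v1 x)) (Cmul (m12 A) (v2 x)))
      (Cadd (Cmul (m21 A) (v1 x)) (Cmul (m22 A) (v2 x))).

(** T power bounded: sup_n ||T^n|| < oo (operator norm written out) *)
Definition power_bounded (T : Mat2) : Prop :=
  exists M : R, forall (n : nat) (x : Vec2), vnorm (Mapply (Mpow T n) x) <= M * vnorm x.

Definition in_H0 (T : Mat2) (x : Vec2) : Prop :=
  Un_cv (fun n => vnorm (Mapply (Mpow T n) x)) 0.

Definition class_C11 (T : Mat2) : Prop :=
  (forall x, in_H0 T x <-> x = V0) /\ (forall x, in_H0 (Madj T) x <-> x = V0).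

(** Convergence of matrices (finite dimension: entrywise = in norm) *)
Definition Mdist_entry (f : Mat2 -> C) (A B : Mat2) : R :=
  Cmod (Cadd (f A) (Copp (f B))).
Definition Mconv (S : nat -> Mat2) (A : Mat2) : Prop :=
  Un_cv (fun n => Mdist_entry m11 (S n) A) 0 /\
  Un_cv (fun n => Mdist_entry m12 (S n) A) 0 /\
  Un_cv (fun n => Mdist_entry m21 (S n) A) 0 /\
  Un_cv (fun n => Mdist_entry m22 (S n) A) 0.

Fixpoint cesaro_sum (T : Mat2) (n : nat) : Mat2 :=
  match n with
  | O => Mzero
  | S k => Madd (cesaro_sum T k) (Mmul (Mpow (Madj T) (S k)) (Mpow T (S k)))
  end.
Definition cesaro_mean (T : Mat2) (n : nat) : Mat2 :=
  Mscale (CofR (/ INR n)) (cesaro_sum T n).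

Definition is_cesaro_limit (T A : Mat2) : Prop := Mconv (cesaro_mean T) A.

Definition is_inverse (A B : Mat2) : Prop := Mmul A B = Mid /\ Mmul B A = Mid.

(* Main.v *)
Require Import Defs.
From Stdlib Require Import Reals.
Open Scope R_scope.
Require Import Defs.
From Stdlib Require Import Reals Lra Lia Psatz Ring Field Classical.
Require Import Defs.
Open Scope R_scope.

Lemma C_ext (a b : C) : re a = re b -> im a = im b -> a = b.
Proof. destruct a, b; simpl; intros; subst; reflexivity. Qed.

Definition Csub a b := Cadd a (Copp b).
Definition Cinv (a : C) : C :=
  mkC (re a / (re a * re a + im a * im a)) (- im a / (re a * re a + im a * im a)).
Definition Cdiv a b := Cmul a (Cinv b).

Lemma Cring_theory : ring_theory C0 C1 Cadd Cmul Csub Copp (@eq C).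
Proof.
  constructor; intros; apply C_ext; destruct x; try destruct y; try destruct z;
  unfold Csub; simpl; ring.
Qed.
Add Ring Cring : Cring_theory.

Lemma C1_neq_C0 : C1 <> C0.
Proof. intro H. injection H. lra. Qed.

Lemma Cfield_theory : field_theory C0 C1 Cadd Cmul Csub Copp Cdiv Cinv (@eq C).
Proof.
  constructor.
  - exact Cring_theory.
  - exact C1_neq_C0.
  - reflexivity.
  - intros [a b] H. assert (a*a+b*b <> 0).
    { intro H0. apply H. assert (a = 0) by nra. assert (b = 0) by nra. subst; reflexivity. }
    apply C_ext; simpl; field; auto.
Qed.
Add Field Cfield : Cfield_theory.


Lemma M_ext (A B : Mat2) : m11 A = m11 B -> m12 A = m12 B -> m21 A = m21 B -> m22 A = m22 B -> A = B.
Proof. destruct A, B; simpl; intros; subst; reflexivity. Qed.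

Lemma Cconj_add a b : Cconj (Cadd a b) = Cadd (Cconj a) (Cconj b).
Proof. apply C_ext; simpl; ring. Qed.
Lemma Cconj_mul a b : Cconj (Cmul a b) = Cmul (Cconj a) (Cconj b).
Proof. apply C_ext; simpl; ring. Qed.
Lemma Cconj_opp a : Cconj (Copp a) = Copp (Cconj a).
Proof. apply C_ext; simpl; ring. Qed.
Lemma Cconj_C1 : Cconj C1 = C1.
Proof. apply C_ext; simpl; ring. Qed.
Lemma Cconj_C0 : Cconj C0 = C0.
Proof. apply C_ext; simpl; ring. Qed.
Lemma Cconj_sub a b : Cconj (Csub a b) = Csub (Cconj a) (Cconj b).
Proof. apply C_ext; simpl; ring. Qed.

Lemma CofR2 : CofR 2 = Cadd C1 C1.
Proof. apply C_ext; simpl; ring. Qed.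


Ltac mring := repeat match goal with M : Mat2 |- _ => destruct M end;
  apply M_ext; simpl; ring.

Lemma Mmul_assoc A B D : Mmul A (Mmul B D) = Mmul (Mmul A B) D.
Proof. mring. Qed.
Lemma Madj_mul A B : Madj (Mmul A B) = Mmul (Madj B) (Madj A).
Proof. repeat match goal with M : Mat2 |- _ => destruct M end;
  apply M_ext; simpl; rewrite ?Cconj_add, ?Cconj_mul; ring. Qed.
Lemma Madj_invol A : Madj (Madj A) = A.
Proof. destruct A; apply M_ext; simpl; apply C_ext; simpl; ring. Qed.
Lemma Madj_Mid : Madj Mid = Mid.
Proof. apply M_ext; simpl; apply C_ext; simpl; ring. Qed.
Lemma Madj_Mzero : Madj Mzero = Mzero.
Proof. apply M_ext; simpl; apply C_ext; simpl; ring. Qed.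
Lemma Madj_add A B : Madj (Madd A B) = Madd (Madj A) (Madj B).
Proof. repeat match goal with M : Mat2 |- _ => destruct M end;
  apply M_ext; simpl; rewrite ?Cconj_add; ring. Qed.
Lemma Madj_lin a b P Q : Madj (Madd (Mscale a P) (Mscale b Q)) =
   Madd (Mscale (Cconj a) (Madj P)) (Mscale (Cconj b) (Madj Q)).
Proof. repeat match goal with M : Mat2 |- _ => destruct M end;
  apply M_ext; simpl; rewrite ?Cconj_add, ?Cconj_mul; ring. Qed.

Lemma expand2 a b c d P Q R S :
  Mmul (Madd (Mscale a P) (Mscale b Q)) (Madd (Mscale c R) (Mscale d S)) =
  Madd (Madd (Mscale (Cmul a c) (Mmul P R)) (Mscale (Cmul a d) (Mmul P S)))
       (Madd (Mscale (Cmul b c) (Mmul Q R)) (Mscale (Cmul b d) (Mmul Q S))).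
Proof. mring. Qed.

Fixpoint Cpow (a : C) (n : nat) : C :=
  match n with O => C1 | S k => Cmul a (Cpow a k) end.

Lemma Cpow_mul a b n : Cmul (Cpow a n) (Cpow b n) = Cpow (Cmul a b) n.
Proof. induction n; simpl. ring. rewrite <- IHn. ring. Qed.
Lemma Cpow_1 n : Cpow C1 n = C1.
Proof. induction n; simpl. reflexivity. rewrite IHn. ring. Qed.

Definition idem_pair (P Q : Mat2) : Prop :=
  Mmul P P = P /\ Mmul Q Q = Q /\ Mmul P Q = Mzero /\ Mmul Q P = Mzero /\ Madd P Q = Mid.

Lemma pow_decomp T P Q a b : idem_pair P Q ->
  T = Madd (Mscale a P) (Mscale b Q) ->
  forall n, Mpow T n = Madd (Mscale (Cpow a n) P) (Mscale (Cpow b n) Q).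
Proof.
  intros [H1 [H2 [H3 [H4 H5]]]] HT n. induction n.
  - simpl. rewrite <- H5. mring.
  - simpl Mpow. rewrite IHn, HT, expand2, H1, H2, H3, H4. simpl Cpow. mring.
Qed.

Lemma idem_adj P Q : idem_pair P Q -> idem_pair (Madj P) (Madj Q).
Proof.
  intros [H1 [H2 [H3 [H4 H5]]]]. unfold idem_pair.
  rewrite <- !Madj_mul, H1, H2, H3, H4, Madj_Mzero, <- Madj_add, H5, Madj_Mid.
  tauto.
Qed.

Lemma Cmod_ge0 a : 0 <= Cmod a.
Proof. unfold Cmod; apply sqrt_pos. Qed.

Lemma Cmod_mul a b : Cmod (Cmul a b) = Cmod a * Cmod b.
Proof.
  unfold Cmod; destruct a as [x y], b as [u v]; simpl.
  rewrite <- sqrt_mult by nra. f_equal. ring.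
Qed.

Lemma Cmod_conj a : Cmod (Cconj a) = Cmod a.
Proof. unfold Cmod; destruct a; simpl. f_equal; ring. Qed.

Lemma Cmod_opp a : Cmod (Copp a) = Cmod a.
Proof. unfold Cmod; destruct a; simpl. f_equal; ring. Qed.

Lemma Cmod_CofR r : Cmod (CofR r) = Rabs r.
Proof. unfold Cmod, CofR; simpl. rewrite <- sqrt_Rsqr_abs. unfold Rsqr. f_equal; ring. Qed.

Lemma Cmod_sq a : Cmod a * Cmod a = re a * re a + im a * im a.
Proof. unfold Cmod. rewrite sqrt_sqrt; nra. Qed.

Lemma Cmod_add a b : Cmod (Cadd a b) <= Cmod a + Cmod b.
Proof.
  assert (Ha := Cmod_ge0 a). assert (Hb := Cmod_ge0 b). assert (Hab := Cmod_ge0 (Cadd a b)).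
  assert (Sa := Cmod_sq a). assert (Sb := Cmod_sq b). assert (Sab := Cmod_sq (Cadd a b)).
  destruct a as [x y], b as [u v]; simpl in *.
  apply Rsqr_incr_0_var; [unfold Rsqr | nra].
  assert (x*u + y*v <= Cmod {| re := x; im := y |} * Cmod {| re := u; im := v |}).
  { set (A := Cmod {| re := x; im := y |}) in *. set (B := Cmod {| re := u; im := v |}) in *.
    assert ((x*u+y*v)*(x*u+y*v) <= (A*B)*(A*B)).
    { replace ((A*B)*(A*B)) with ((A*A)*(B*B)) by ring. rewrite Sa, Sb. pose proof (Rle_0_sqr (x*v-y*u)). unfold Rsqr in *.
      assert (E: (x*x+y*y)*(u*u+v*v) - (x*u+y*v)*(x*u+y*v) = (x*v-y*u)*(x*v-y*u)) by ring. lra. }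
    assert (0 <= A*B) by nra. nra. }
  nra.
Qed.

Lemma Cmod_zero a : Cmod a = 0 -> a = C0.
Proof.
  intro H. assert (S := Cmod_sq a). rewrite H in S. destruct a as [x y]; simpl in *.
  apply C_ext; simpl; nra.
Qed.

Lemma Cmod_pos a : a <> C0 -> 0 < Cmod a.
Proof. intro H. destruct (Cmod_ge0 a) as [h|h]; auto. symmetry in h. apply Cmod_zero in h. contradiction. Qed.

Lemma Cmod_C1 : Cmod C1 = 1.
Proof. unfold Cmod; simpl. replace (1*1+0*0) with 1 by ring. apply sqrt_1. Qed.

Lemma Cmod_pow a n : Cmod (Cpow a n) = Cmod a ^ n.
Proof. induction n; simpl. apply Cmod_C1. rewrite Cmod_mul, IHn. reflexivity. Qed.

Lemma conj_mul_unit a : Cmod a = 1 -> Cmul (Cconj a) a = C1.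
Proof.
  intro H. assert (S := Cmod_sq a). rewrite H in S. destruct a; simpl in *.
  apply C_ext; simpl; nra.
Qed.

Lemma Cmod_sub_le a b : Cmod a - Cmod b <= Cmod (Cadd a b).
Proof.
  assert (H := Cmod_add (Cadd a b) (Copp b)). rewrite Cmod_opp in H.
  replace (Cadd (Cadd a b) (Copp b)) with a in H by ring. lra.
Qed.

Lemma cv_K_over_n (f : nat -> R) (K : R) :
  (forall n, (1 <= n)%nat -> 0 <= f n <= K / INR n) -> Un_cv f 0.
Proof.
  intros H eps Heps.
  destruct (archimed (Rabs K / eps)) as [Hn _].
  destruct (INR_unbounded (Rabs K / eps)) as [N HN].
  exists (S N). intros n Hn'. unfold R_dist. rewrite Rminus_0_r.
  assert (Hn1 : (1 <= n)%nat) by lia.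
  destruct (H n Hn1) as [H0 H1]. rewrite Rabs_pos_eq by lra.
  assert (INR N <= INR n) by (apply le_INR; lia).
  assert (0 < INR n) by (apply lt_0_INR; lia).
  apply Rle_lt_trans with (K / INR n); auto.
  apply Rle_lt_trans with (Rabs K / INR n).
  { unfold Rdiv. apply Rmult_le_compat_r. left; apply Rinv_0_lt_compat; lra. apply Rle_abs. }
  apply (Rmult_lt_reg_r (INR n)); auto. replace (Rabs K / INR n * INR n) with (Rabs K) by (field; lra).
  assert (Rabs K < eps * INR n).
  { assert (Rabs K / eps < INR n) by lra.
    apply (Rmult_lt_reg_r (/ eps)). apply Rinv_0_lt_compat; lra.
    replace (eps * INR n * / eps) with (INR n) by (field; lra). exact H4. }
  lra.
Qed.

Definition Vscale (c : C) (v : Vec2) : Vec2 := mkV (Cmul c (v1 v)) (Cmul c (v2 v)).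

Lemma V_ext (a b : Vec2) : v1 a = v1 b -> v2 a = v2 b -> a = b.
Proof. destruct a, b; simpl; intros; subst; reflexivity. Qed.

Lemma Mapply_mul A B x : Mapply (Mmul A B) x = Mapply A (Mapply B x).
Proof. destruct A, B, x; apply V_ext; simpl; ring. Qed.

Lemma Mapply_scale A c x : Mapply A (Vscale c x) = Vscale c (Mapply A x).
Proof. destruct A, x; apply V_ext; simpl; ring. Qed.

Lemma vnorm_scale c v : vnorm (Vscale c v) = Cmod c * vnorm v.
Proof.
  unfold vnorm; simpl. rewrite !Cmod_mul.
  replace (Cmod c * Cmod (v1 v) * (Cmod c * Cmod (v1 v)) + Cmod c * Cmod (v2 v) * (Cmod c * Cmod (v2 v)))
    with ((Cmod c * Cmod c) * (Cmod (v1 v) * Cmod (v1 v) + Cmod (v2 v) * Cmod (v2 v))) by ring.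
  rewrite sqrt_mult_alt, sqrt_square; auto using Cmod_ge0.
  apply Rmult_le_pos; apply Cmod_ge0.
Qed.

Lemma vnorm_ge1 v : Cmod (v1 v) <= vnorm v.
Proof.
  unfold vnorm. rewrite <- (sqrt_square (Cmod (v1 v))) at 1 by apply Cmod_ge0.
  apply sqrt_le_1_alt. pose proof (Cmod_ge0 (v2 v)). nra.
Qed.
Lemma vnorm_ge2 v : Cmod (v2 v) <= vnorm v.
Proof.
  unfold vnorm. rewrite <- (sqrt_square (Cmod (v2 v))) at 1 by apply Cmod_ge0.
  apply sqrt_le_1_alt. pose proof (Cmod_ge0 (v1 v)). nra.
Qed.


Lemma vnorm_pos v : v <> V0 -> 0 < vnorm v.
Proof.
  intro H. destruct v as [a b].
  assert (Ha := vnorm_ge1 (mkV a b)). assert (Hb := vnorm_ge2 (mkV a b)). simpl in *.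
  destruct (Req_dec (Cmod a) 0) as [Ha0|Ha0].
  - destruct (Req_dec (Cmod b) 0) as [Hb0|Hb0].
    + apply Cmod_zero in Ha0. apply Cmod_zero in Hb0. subst. exfalso; apply H; reflexivity.
    + pose proof (Cmod_ge0 b). lra.
  - pose proof (Cmod_ge0 a). lra.
Qed.

Lemma Mpow_eig T v l : Mapply T v = Vscale l v ->
  forall n, Mapply (Mpow T n) v = Vscale (Cpow l n) v.
Proof.
  intros H n. induction n; simpl.
  - destruct v; apply V_ext; simpl; ring.
  - rewrite Mapply_mul, IHn, Mapply_scale, H. destruct v; apply V_ext; simpl; ring.
Qed.

Lemma eig_unit T v l : power_bounded T -> (forall x, in_H0 T x -> x = V0) ->
  Mapply T v = Vscale l v -> v <> V0 -> Cmod l = 1.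
Proof.
  intros [M HM] H0 Hv Hnz.
  assert (Hp := vnorm_pos v Hnz).
  assert (Hn : forall n, vnorm (Mapply (Mpow T n) v) = Cmod l ^ n * vnorm v).
  { intro n. rewrite (Mpow_eig T v l Hv), vnorm_scale, Cmod_pow. reflexivity. }
  assert (Hl0 := Cmod_ge0 l).
  destruct (Rtotal_order (Cmod l) 1) as [Hlt|[Heq|Hgt]]; auto.
  - exfalso. apply Hnz. apply H0. intros eps Heps.
    destruct (pow_lt_1_zero (Cmod l)) with (y := eps / vnorm v) as [N HN].
    { rewrite Rabs_pos_eq; lra. }
    { apply Rdiv_lt_0_compat; lra. }
    exists N. intros n Hn'. unfold R_dist. rewrite Rminus_0_r, Hn.
    specialize (HN n Hn'). rewrite Rabs_mult, (Rabs_pos_eq (vnorm v)) by lra.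
    apply (Rmult_lt_compat_r (vnorm v)) in HN; auto.
    replace (eps / vnorm v * vnorm v) with eps in HN by (field; lra). exact HN.
  - exfalso. destruct (Pow_x_infinity (Cmod l)) with (b := M + 1) as [N HN].
    { rewrite Rabs_pos_eq; lra. }
    specialize (HN N (le_n N)). specialize (HM N v). rewrite Hn in HM.
    rewrite Rabs_pos_eq in HN by (apply pow_le; lra).
    assert (M + 1 <= M) by (apply (Rmult_le_reg_r (vnorm v)); nra). lra.
Qed.

Fixpoint gs (z : C) (n : nat) : C :=
  match n with O => C0 | S k => Cadd (gs z k) (Cpow z (S k)) end.

Lemma gs_mul z n : Cmul (gs z n) (Csub z C1) = Csub (Cpow z (S n)) z.
Proof.
  induction n.
  - simpl. ring.
  - change (gs z (S n)) with (Cadd (gs z n) (Cpow z (S n))).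
    transitivity (Cadd (Cmul (gs z n) (Csub z C1)) (Cmul (Cpow z (S n)) (Csub z C1))). ring.
    rewrite IHn. change (Cpow z (S (S n))) with (Cmul z (Cpow z (S n))). ring.
Qed.

Lemma gs_entry_bound z e : (z <> C1 /\ Cmod z = 1) \/ e = C0 ->
  exists K, forall n, Cmod (Cmul (gs z n) e) <= K.
Proof.
  intros [[Hz1 Hz]|He].
  - assert (Hd : 0 < Cmod (Csub z C1)).
    { apply Cmod_pos. intro H. apply Hz1. 
      replace z with (Cadd (Csub z C1) C1) by ring. rewrite H. ring. }
    exists (2 / Cmod (Csub z C1) * Cmod e). intro n. rewrite Cmod_mul.
    apply Rmult_le_compat_r. apply Cmod_ge0.
    apply (Rmult_le_reg_r (Cmod (Csub z C1))); auto.
    replace (2 / Cmod (Csub z C1) * Cmod (Csub z C1)) with 2 by (field; lra).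
    rewrite <- Cmod_mul, gs_mul. unfold Csub.
    eapply Rle_trans. apply Cmod_add. rewrite Cmod_opp, Cmod_pow, Hz, pow1. lra.
  - subst. exists 0. intro n. replace (Cmul (gs z n) C0) with C0 by ring.
    unfold Cmod; simpl. replace (0*0+0*0) with 0 by ring. rewrite sqrt_0. lra.
Qed.

Lemma CofR_inv_n n : (1 <= n)%nat -> Cmul (CofR (/ INR n)) (CofR (INR n)) = C1.
Proof.
  intro H. assert (0 < INR n) by (apply lt_0_INR; lia).
  apply C_ext; simpl; field; lra.
Qed.

Lemma entry_conv (f : Mat2 -> C)
  (Hadd : forall A B, f (Madd A B) = Cadd (f A) (f B))
  (Hsc : forall c A, f (Mscale c A) = Cmul c (f A))
  T X Y W z zb K1 K2 :
  (forall n, cesaro_sum T n =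
     Madd (Mscale (CofR (INR n)) X) (Madd (Mscale (gs z n) Y) (Mscale (gs zb n) W))) ->
  (forall n, Cmod (Cmul (gs z n) (f Y)) <= K1) ->
  (forall n, Cmod (Cmul (gs zb n) (f W)) <= K2) ->
  Un_cv (fun n => Mdist_entry f (cesaro_mean T n) X) 0.
Proof.
  intros Hs H1 H2. apply cv_K_over_n with (K1 + K2). intros n Hn.
  unfold Mdist_entry, cesaro_mean. rewrite Hsc, Hs, !Hadd, !Hsc.
  assert (Hu := CofR_inv_n n Hn).
  assert (0 < INR n) by (apply lt_0_INR; lia).
  set (u := CofR (/ INR n)) in *. set (v := CofR (INR n)) in *.
  replace (Cadd (Cmul u (Cadd (Cmul v (f X)) (Cadd (Cmul (gs z n) (f Y)) (Cmul (gs zb n) (f W))))) (Copp (f X)))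
   with (Cadd (Cmul (Cmul u v) (f X)) (Cadd (Cmul u (Cadd (Cmul (gs z n) (f Y)) (Cmul (gs zb n) (f W)))) (Copp (f X)))) by ring.
  rewrite Hu. replace (Cadd (Cmul C1 (f X)) (Cadd (Cmul u (Cadd (Cmul (gs z n) (f Y)) (Cmul (gs zb n) (f W)))) (Copp (f X))))
   with (Cmul u (Cadd (Cmul (gs z n) (f Y)) (Cmul (gs zb n) (f W)))) by ring.
  split. apply Cmod_ge0.
  rewrite Cmod_mul. unfold u. rewrite Cmod_CofR, Rabs_pos_eq.
  2: { left. apply Rinv_0_lt_compat; lra. }
  unfold Rdiv. rewrite Rmult_comm. apply Rmult_le_compat_r.
  left; apply Rinv_0_lt_compat; lra.
  eapply Rle_trans. apply Cmod_add. specialize (H1 n). specialize (H2 n). lra.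
Qed.

Lemma cesaro_gen T P Q a b : idem_pair P Q -> T = Madd (Mscale a P) (Mscale b Q) ->
  Cmod a = 1 -> Cmod b = 1 -> (a <> b \/ Q = Mzero) ->
  is_cesaro_limit T (Madd (Mmul (Madj P) P) (Mmul (Madj Q) Q)).
Proof.
  intros HPQ HT Ha Hb Hab.
  set (X := Madd (Mmul (Madj P) P) (Mmul (Madj Q) Q)).
  set (Y := Mmul (Madj P) Q). set (W := Mmul (Madj Q) P).
  set (z := Cmul (Cconj a) b). set (zb := Cmul (Cconj b) a).
  assert (Hterm : forall j, Mmul (Mpow (Madj T) j) (Mpow T j) =
     Madd X (Madd (Mscale (Cpow z j) Y) (Mscale (Cpow zb j) W))).
  { intro j.
    rewrite (pow_decomp (Madj T) (Madj P) (Madj Q) (Cconj a) (Cconj b) (idem_adj P Q HPQ)).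
    2: { rewrite HT. apply Madj_lin. }
    rewrite (pow_decomp T P Q a b HPQ HT), expand2, !Cpow_mul, !conj_mul_unit, Cpow_1 by auto.
    subst X Y W z zb. generalize (Cpow (Cmul (Cconj a) b) j) (Cpow (Cmul (Cconj b) a) j).
    intros. clear HT HPQ Hab. mring. }
  assert (Hsum : forall n, cesaro_sum T n =
     Madd (Mscale (CofR (INR n)) X) (Madd (Mscale (gs z n) Y) (Mscale (gs zb n) W))).
  { induction n.
    - change (INR 0) with 0. change (gs z 0) with C0. change (gs zb 0) with C0.
      replace (CofR 0) with C0 by (apply C_ext; reflexivity).
      change (cesaro_sum T 0) with Mzero. clearbody X Y W. clear. mring.
    - change (cesaro_sum T (S n)) with (Madd (cesaro_sum T n) (Mmul (Mpow (Madj T) (S n)) (Mpow T (S n)))).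
      rewrite IHn, Hterm. rewrite S_INR.
      change (gs z (S n)) with (Cadd (gs z n) (Cpow z (S n))).
      change (gs zb (S n)) with (Cadd (gs zb n) (Cpow zb (S n))).
      replace (CofR (INR n + 1)) with (Cadd (CofR (INR n)) C1) by (apply C_ext; simpl; ring).
      generalize (CofR (INR n)) (gs z n) (gs zb n) (Cpow z (S n)) (Cpow zb (S n)).
      intros. clearbody X Y W. clear. mring. }
  assert (Hzz : forall u v, Cmod u = 1 -> Cmod v = 1 -> u <> v ->
     Cmul (Cconj u) v <> C1 /\ Cmod (Cmul (Cconj u) v) = 1).
  { intros u v Hu Hv Huv. split.
    - intro Hz. apply Huv.
      replace v with (Cmul (Cmul (Cconj u) u) v) by (rewrite conj_mul_unit by auto; ring).
      replace (Cmul (Cmul (Cconj u) u) v) with (Cmul u (Cmul (Cconj u) v)) by ring.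
      rewrite Hz. ring.
    - rewrite Cmod_mul, Cmod_conj, Hu, Hv. ring. }
  assert (Hbnd : forall e, (e = C0 \/ a <> b) -> (exists K, forall n, Cmod (Cmul (gs z n) e) <= K)
                             /\ (exists K, forall n, Cmod (Cmul (gs zb n) e) <= K)).
  { intros e He. destruct He as [He|He]; split; apply gs_entry_bound; auto; left.
    - apply Hzz; auto.
    - apply Hzz; auto. }
  assert (HY : forall f : Mat2 -> C, (f = m11 \/ f = m12 \/ f = m21 \/ f = m22) ->
            (f Y = C0 \/ a <> b) /\ (f W = C0 \/ a <> b)).
  { intros f Hf. destruct Hab as [Hab|HQ]; [split; right; auto|].
    subst Y W. rewrite HQ. clear -Hf. destruct P.
    destruct Hf as [-> | [-> | [-> | ->]]]; split; left; apply C_ext; simpl; ring. }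
  unfold is_cesaro_limit, Mconv.
  repeat split.
  1: destruct (HY m11) as [H1 H2]; auto.
  2: destruct (HY m12) as [H1 H2]; auto.
  3: destruct (HY m21) as [H1 H2]; auto.
  4: destruct (HY m22) as [H1 H2]; auto.
  all: destruct (Hbnd _ H1) as [[K1 HK1] _]; destruct (Hbnd _ H2) as [_ [K2 HK2]];
    eapply entry_conv with (Y := Y) (W := W); eauto; reflexivity.
Qed.

Lemma Csqrt_ex z : exists s, Cmul s s = z.
Proof.
  destruct z as [a b].
  set (r := sqrt (a*a + b*b)).
  assert (Hr0 : 0 <= r) by apply sqrt_pos.
  assert (Hr2 : r * r = a*a + b*b) by (apply sqrt_sqrt; nra).
  assert (Hra : Rabs a <= r).
  { apply Rsqr_incr_0_var. unfold Rsqr. rewrite Hr2. rewrite <- Rabs_mult, Rabs_pos_eq by nra. nra. auto. }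
  assert (H1 : 0 <= (r + a) / 2) by (pose proof (Rle_abs (-a)); rewrite Rabs_Ropp in *; lra).
  assert (H2 : 0 <= (r - a) / 2) by (pose proof (Rle_abs a); lra).
  set (x := sqrt ((r + a) / 2)). set (y := sqrt ((r - a) / 2)).
  assert (Hx : x * x = (r + a) / 2) by (apply sqrt_sqrt; auto).
  assert (Hy : y * y = (r - a) / 2) by (apply sqrt_sqrt; auto).
  assert (Hx0 : 0 <= x) by apply sqrt_pos. assert (Hy0 : 0 <= y) by apply sqrt_pos.
  assert (Hxy : 2 * (x * y) = Rabs b).
  { assert (E : (2*(x*y)) * (2*(x*y)) = Rabs b * Rabs b).
    { replace ((2*(x*y)) * (2*(x*y))) with (4 * (x*x) * (y*y)) by ring. rewrite Hx, Hy.
      rewrite <- Rabs_mult, Rabs_pos_eq by nra. nra. }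
    assert (0 <= Rabs b) by apply Rabs_pos.
    assert (0 <= 2*(x*y)) by nra. nra. }
  destruct (Rle_dec 0 b) as [Hb|Hb].
  - exists (mkC x y). apply C_ext; simpl.
    + lra.
    + rewrite Rabs_pos_eq in Hxy by auto. lra.
  - exists (mkC x (- y)). apply C_ext; simpl.
    + lra.
    + rewrite Rabs_left in Hxy by lra. lra.
Qed.
Definition Kof (p q r : C) := Cadd (Cadd (Cmul (Cconj p) p) (Cmul (Cconj q) q))
   (Cadd (Cmul (Cconj r) r) (Cmul (Csub C1 (Cconj p)) (Csub C1 p))).

Lemma alg_AB (p q r : C) (H : Cmul q r = Csub p (Cmul p p)) :
  let P := mkM p q r (Csub C1 p) in
  let Q := mkM (Csub C1 p) (Copp q) (Copp r) p in
  let A := Madd (Mmul (Madj P) P) (Mmul (Madj Q) Q) in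
  let B := Madd (Mmul P (Madj P)) (Mmul Q (Madj Q)) in
  Mmul A B = Mscale (Kof p q r) Mid /\ Mmul B A = Mscale (Kof p q r) Mid /\
  Madd A B = Mscale (Cmul (CofR 2) (Kof p q r)) Mid.
Proof.
  assert (Hc : Cmul (Cconj q) (Cconj r) = Csub (Cconj p) (Cmul (Cconj p) (Cconj p))).
  { rewrite <- Cconj_mul, H, Cconj_sub, Cconj_mul. reflexivity. }
  intros P Q A B; subst P Q A B.
  split; [|split]; apply M_ext; unfold Kof; simpl;
  rewrite ?Cconj_add, ?Cconj_sub, ?Cconj_opp, ?Cconj_C1;
  generalize dependent (Cconj p); generalize dependent (Cconj q); generalize dependent (Cconj r);
  intros rb qb pb Hc.
  all: rewrite ?CofR2; ring_simplify [H Hc]; reflexivity.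
Qed.

Definition C2 := Cadd C1 C1.

Ltac cside := repeat split; try assumption;
  let HH := fresh in intro HH; injection HH; intros; lra.

Lemma Mscale_mul_r A c B : Mmul A (Mscale c B) = Mscale c (Mmul A B).
Proof. mring. Qed.
Lemma Mscale_mul_l A c B : Mmul (Mscale c B) A = Mscale c (Mmul B A).
Proof. mring. Qed.
Lemma Mscale_scale c k A : Mscale c (Mscale k A) = Mscale (Cmul c k) A.
Proof. mring. Qed.
Lemma Mscale_add c A B : Madd (Mscale c A) (Mscale c B) = Mscale c (Madd A B).
Proof. mring. Qed.
Lemma Mscale_1 A : Mscale C1 A = A.
Proof. mring. Qed.

Lemma eig_from_proj T P l : power_bounded T -> (forall x, in_H0 T x -> x = V0) ->
  Mmul T P = Mscale l P -> Cadd (m11 P) (m22 P) = C1 -> Cmod l = 1.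
Proof.
  intros Hpb H0 HTP Htr.
  assert (Hv : forall u, Mapply T (Mapply P u) = Vscale l (Mapply P u)).
  { intro u. rewrite <- Mapply_mul, HTP. destruct P, u; apply V_ext; simpl; ring. }
  destruct (classic (Mapply P (mkV C1 C0) = V0)) as [E1|E1].
  - destruct (classic (Mapply P (mkV C0 C1) = V0)) as [E2|E2].
    + exfalso. destruct P as [a b c d].
      pose proof (f_equal v1 E1) as F1; pose proof (f_equal v2 E2) as F2.
      cbn [v1 v2 Mapply m11 m12 m21 m22 V0] in F1, F2, Htr.
      assert (Ha : a = C0). { rewrite <- F1. ring. }
      assert (Hd : d = C0). { rewrite <- F2. ring. }
      rewrite Ha, Hd in Htr. apply C1_neq_C0. rewrite <- Htr. ring.
    + eapply eig_unit; eauto.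
  - eapply eig_unit; eauto.
Qed.

Lemma Kof_re p q r : 0 < re (Kof p q r).
Proof.
  destruct p as [a b], q as [c d], r as [f g]; simpl. nra.
Qed.

Lemma Kof_nz p q r : Kof p q r <> C0.
Proof. intro H. pose proof (Kof_re p q r). rewrite H in H0. simpl in H0. lra. Qed.

Lemma Cconj_invol a : Cconj (Cconj a) = a.
Proof. apply C_ext; simpl; ring. Qed.
Lemma Madd_comm A B : Madd A B = Madd B A.
Proof. mring. Qed.
Lemma Cadd_comm_C a b : Cadd a b = Cadd b a.
Proof. ring. Qed.

Lemma case_distinct x y z w s :
  power_bounded (mkM x y z w) -> (forall v, in_H0 (mkM x y z w) v -> v = V0) ->
  Cmul s s = Cadd (Cmul (Csub x w) (Csub x w)) (Cmul (Cmul (Cmul C2 C2) y) z) -> s <> C0 ->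
  exists A B Ainv Binv : Mat2,
    is_cesaro_limit (mkM x y z w) A /\ is_cesaro_limit (Madj (mkM x y z w)) B /\
    is_inverse A Ainv /\ is_inverse B Binv /\
    Madd Ainv Binv = Mscale (CofR 2) Mid.
Proof.
  intros Hpb H0 Hs Hs0.
  set (T := mkM x y z w) in *.
  set (e := Csub x w) in *.
  assert (H2 : C2 <> C0) by (unfold C2; cside).
  set (c := Cinv s). set (h := Cinv C2).
  set (l1 := Cmul (Cadd (Cadd x w) s) h). set (l2 := Cmul (Csub (Cadd x w) s) h).
  set (P := mkM (Cmul (Cmul (Cadd e s) c) h) (Cmul y c) (Cmul z c) (Cmul (Cmul (Csub s e) c) h)).
  set (Q := mkM (Cmul (Cmul (Csub s e) c) h) (Copp (Cmul y c)) (Copp (Cmul z c)) (Cmul (Cmul (Cadd e s) c) h)).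
  assert (HPQ : idem_pair P Q).
  { unfold idem_pair; repeat split; apply M_ext; subst P Q c h e; unfold C2 in *; simpl;
    field [Hs]; cside. }
  assert (HT : T = Madd (Mscale l1 P) (Mscale l2 Q)).
  { apply M_ext; subst T P Q c h e l1 l2; unfold C2 in *; simpl; field [Hs]; cside. }
  assert (HTP : Mmul T P = Mscale l1 P).
  { apply M_ext; subst T P Q c h e l1 l2; unfold C2 in *; simpl; field [Hs]; cside. }
  assert (HTQ : Mmul T Q = Mscale l2 Q).
  { apply M_ext; subst T P Q c h e l1 l2; unfold C2 in *; simpl; field [Hs]; cside. }
  assert (HtrP : Cadd (m11 P) (m22 P) = C1).
  { subst P c h e; unfold C2 in *; simpl; field; cside. }
  assert (HtrQ : Cadd (m11 Q) (m22 Q) = C1).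
  { subst Q c h e; unfold C2 in *; simpl; field; cside. }
  assert (Hl1 : Cmod l1 = 1) by (eapply eig_from_proj; eauto).
  assert (Hl2 : Cmod l2 = 1) by (eapply eig_from_proj; eauto).
  assert (Hl12 : l1 <> l2).
  { intro E. apply Hs0. assert (Csub l1 l2 = s).
    { subst l1 l2 h; unfold C2 in *; field; cside. }
    rewrite <- H, E. ring. }
  assert (HA := cesaro_gen T P Q l1 l2 HPQ HT Hl1 Hl2 (or_introl Hl12)).
  assert (HB := cesaro_gen (Madj T) (Madj P) (Madj Q) (Cconj l1) (Cconj l2) (idem_adj P Q HPQ)
     ltac:(rewrite HT; apply Madj_lin) ltac:(rewrite Cmod_conj; auto) ltac:(rewrite Cmod_conj; auto)
     ltac:(left; intro E; apply Hl12; rewrite <- (Cconj_invol l1), E; apply Cconj_invol)).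
  rewrite !Madj_invol in HB.
  set (p := m11 P) in *. set (q := m12 P) in *. set (r := m21 P) in *.
  assert (Hqr : Cmul q r = Csub p (Cmul p p)).
  { subst p q r P c h e; unfold C2 in *; simpl; field [Hs]; cside. }
  assert (EP : P = mkM p q r (Csub C1 p)).
  { apply M_ext; try reflexivity. subst p P c h e; unfold C2 in *; simpl; field; cside. }
  assert (EQ : Q = mkM (Csub C1 p) (Copp q) (Copp r) p).
  { apply M_ext; subst p q r P Q c h e; unfold C2 in *; simpl; field; cside. }
  clearbody p q r.
  destruct (alg_AB p q r Hqr) as [HAB [HBA HApB]].
  rewrite <- EP, <- EQ in HAB, HBA, HApB.
  set (A := Madd (Mmul (Madj P) P) (Mmul (Madj Q) Q)) in *.
  set (B := Madd (Mmul P (Madj P)) (Mmul Q (Madj Q))) in *.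
  set (k := Kof p q r) in *.
  assert (Hk := Kof_nz p q r). fold k in Hk.
  exists A, B, (Mscale (Cinv k) B), (Mscale (Cinv k) A).
  assert (Hkk : Cmul (Cinv k) k = C1) by (field; auto).
  split; [exact HA|]. split; [exact HB|].
  split; [|split]; [split|split|].
  - rewrite Mscale_mul_r, HAB, Mscale_scale, Hkk, Mscale_1. reflexivity.
  - rewrite Mscale_mul_l, HBA, Mscale_scale, Hkk, Mscale_1. reflexivity.
  - rewrite Mscale_mul_r, HBA, Mscale_scale, Hkk, Mscale_1. reflexivity.
  - rewrite Mscale_mul_l, HAB, Mscale_scale, Hkk, Mscale_1. reflexivity.
  - rewrite Mscale_add, Madd_comm, HApB, Mscale_scale. f_equal. field; auto.
Qed.

Lemma unbounded_contra c K : 0 < c -> (forall n, INR (S n) * c <= K) -> False.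
Proof.
  intros Hc H. destruct (INR_unbounded (K / c)) as [N HN].
  specialize (H N). rewrite S_INR in H.
  assert (K < (INR N + 1) * c).
  { apply Rlt_le_trans with (INR N * c + c); [|lra].
    assert (K / c * c = K) by (field; lra).
    assert (K / c * c < INR N * c) by (apply Rmult_lt_compat_r; lra). lra. }
  lra.
Qed.

Lemma jordan_pow T l N : T = Madd (Mscale l Mid) N -> Mmul N N = Mzero ->
  forall n, Mpow T (S n) = Madd (Mscale (Cpow l (S n)) Mid) (Mscale (Cmul (CofR (INR (S n))) (Cpow l n)) N).
Proof.
  intros HT HN n. induction n.
  - change (Mpow T 1) with (Mmul T Mid). rewrite HT.
    replace (CofR (INR 1)) with C1 by (apply C_ext; simpl; ring).
    change (Cpow l 1) with (Cmul l C1). change (Cpow l 0) with C1. mring.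
  - change (Mpow T (S (S n))) with (Mmul T (Mpow T (S n))). rewrite IHn.
    assert (E : Mmul (Madd (Mscale l Mid) N) (Madd (Mscale (Cpow l (S n)) Mid) (Mscale (Cmul (CofR (INR (S n))) (Cpow l n)) N))
      = Madd (Madd (Mscale (Cmul l (Cpow l (S n))) Mid) (Mscale (Cadd (Cmul l (Cmul (CofR (INR (S n))) (Cpow l n))) (Cpow l (S n))) N))
             (Mscale (Cmul (CofR (INR (S n))) (Cpow l n)) (Mmul N N))) by mring.
    rewrite HT, E, HN. clear E.
    rewrite (S_INR (S n)).
    replace (CofR (INR (S n) + 1)) with (Cadd (CofR (INR (S n))) C1) by (apply C_ext; simpl; ring).
    change (Cpow l (S (S n))) with (Cmul l (Cpow l (S n))).
    change (Cpow l (S n)) with (Cmul l (Cpow l n)).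
    generalize (CofR (INR (S n))) (Cpow l n). intros. clear HT HN IHn. mring.
Qed.

Lemma no_jordan T l N u : power_bounded T -> Cmod l = 1 ->
  (forall n, Mpow T (S n) = Madd (Mscale (Cpow l (S n)) Mid) (Mscale (Cmul (CofR (INR (S n))) (Cpow l n)) N)) ->
  Mapply N u <> V0 -> False.
Proof.
  intros [M HM] Hl Hpow Hq.
  assert (Hcore : forall g : Vec2 -> C, (forall v, Cmod (g v) <= vnorm v) ->
     (forall a b, g (Mapply (Madd (Mscale a Mid) (Mscale b N)) u) = Cadd (Cmul a (g u)) (Cmul b (g (Mapply N u)))) ->
     g (Mapply N u) <> C0 -> False).
  { intros g Hg1 Hg2 Hg3. apply (unbounded_contra (Cmod (g (Mapply N u))) (M * vnorm u + Cmod (g u))).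
    apply Cmod_pos; auto.
    intro n. specialize (HM (S n) u). rewrite Hpow in HM.
    assert (H1 := Hg1 (Mapply (Madd (Mscale (Cpow l (S n)) Mid) (Mscale (Cmul (CofR (INR (S n))) (Cpow l n)) N)) u)).
    rewrite Hg2 in H1.
    assert (H2 := Cmod_sub_le (Cmul (Cmul (CofR (INR (S n))) (Cpow l n)) (g (Mapply N u))) (Cmul (Cpow l (S n)) (g u))).
    rewrite Cadd_comm_C in H2.
    rewrite !Cmod_mul, !Cmod_pow, Hl, !pow1, Cmod_CofR, Rabs_pos_eq in H2 by apply pos_INR.
    lra. }
  destruct (classic (v1 (Mapply N u) = C0)) as [E1|E1].
  - apply (Hcore v2); auto.
    + apply vnorm_ge2.
    + intros; destruct N, u; apply C_ext; simpl; ring.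
    + intro E2. apply Hq. destruct (Mapply N u); simpl in *; subst; reflexivity.
  - apply (Hcore v1); auto.
    + apply vnorm_ge1.
    + intros; destruct N, u; apply C_ext; simpl; ring.
Qed.

Lemma idem_Mid : idem_pair Mid Mzero.
Proof. unfold idem_pair; repeat split; apply M_ext; apply C_ext; simpl; ring. Qed.

Lemma X_Mid : Madd (Mmul (Madj Mid) Mid) (Mmul (Madj Mzero) Mzero) = Mid.
Proof. apply M_ext; apply C_ext; simpl; ring. Qed.

Lemma case_double x y z w :
  power_bounded (mkM x y z w) -> (forall v, in_H0 (mkM x y z w) v -> v = V0) ->
  Cmul (Csub x w) (Csub x w) = Copp (Cmul (Cmul (Cmul C2 C2) y) z) ->
  exists A B Ainv Binv : Mat2,
    is_cesaro_limit (mkM x y z w) A /\ is_cesaro_limit (Madj (mkM x y z w)) B /\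
    is_inverse A Ainv /\ is_inverse B Binv /\
    Madd Ainv Binv = Mscale (CofR 2) Mid.
Proof.
  intros Hpb H0 Hd.
  set (T := mkM x y z w) in *.
  set (e := Csub x w) in *.
  assert (H2 : C2 <> C0) by (unfold C2; cside).
  set (h := Cinv C2).
  set (l := Cmul (Cadd x w) h).
  set (N := mkM (Cmul e h) y z (Copp (Cmul e h))).
  assert (HT : T = Madd (Mscale l Mid) N).
  { apply M_ext; subst T N l h e; unfold C2 in *; simpl; field; cside. }
  assert (HN : Mmul N N = Mzero).
  { clear HT. clearbody e. apply M_ext; subst N h; unfold C2 in *; simpl; field [Hd]; cside. }
  assert (Heig : forall u, Mapply T (Mapply N u) = Vscale l (Mapply N u)).
  { intro u. rewrite HT, <- Mapply_mul.
    assert (E : Mmul (Madd (Mscale l Mid) N) N = Madd (Mscale l N) (Mmul N N)) by mring.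
    rewrite E, HN. clearbody N. destruct N, u. apply V_ext; simpl; ring. }
  assert (Hpow := jordan_pow T l N HT HN).
  assert (Hnz : forall u, Mapply N u = V0).
  { intro u. apply NNPP. intro Hu.
    assert (Hl : Cmod l = 1) by (eapply eig_unit; eauto).
    eapply no_jordan; eauto. }
  assert (HN0 : N = Mzero).
  { pose proof (Hnz (mkV C1 C0)) as F1. pose proof (Hnz (mkV C0 C1)) as F2.
    clearbody N. destruct N as [a b c d].
    pose proof (f_equal v1 F1) as G1; pose proof (f_equal v2 F1) as G2.
    pose proof (f_equal v1 F2) as G3; pose proof (f_equal v2 F2) as G4.
    cbn [v1 v2 Mapply m11 m12 m21 m22 V0] in G1, G2, G3, G4.
    apply M_ext; cbn [m11 m12 m21 m22 Mzero].
    - rewrite <- G1; ring. - rewrite <- G3; ring. - rewrite <- G2; ring. - rewrite <- G4; ring. }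
  assert (Hl : Cmod l = 1).
  { apply (eig_unit T (mkV C1 C0) l Hpb H0).
    - rewrite HT, HN0. apply V_ext; apply C_ext; simpl; ring.
    - intro E. apply C1_neq_C0. exact (f_equal v1 E). }
  assert (HT' : T = Madd (Mscale l Mid) (Mscale l Mzero)).
  { rewrite HT, HN0. mring. }
  assert (HA := cesaro_gen T Mid Mzero l l idem_Mid HT' Hl Hl (or_intror eq_refl)).
  assert (HB := cesaro_gen (Madj T) (Madj Mid) (Madj Mzero) (Cconj l) (Cconj l) (idem_adj _ _ idem_Mid)
     ltac:(rewrite HT'; apply Madj_lin) ltac:(rewrite Cmod_conj; auto) ltac:(rewrite Cmod_conj; auto)
     ltac:(right; apply Madj_Mzero)).
  rewrite Madj_Mid, Madj_Mzero, X_Mid in HB. rewrite X_Mid in HA.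
  exists Mid, Mid, Mid, Mid.
  assert (I1 : Mmul Mid Mid = Mid) by (apply M_ext; apply C_ext; simpl; ring).
  split; [exact HA|]. split; [exact HB|].
  split; [split; exact I1|]. split; [split; exact I1|].
  apply M_ext; apply C_ext; simpl; ring.
Qed.

Theorem mainTheorem9 (T : Mat2) :
  power_bounded T -> class_C11 T ->
  exists A B Ainv Binv : Mat2,
    is_cesaro_limit T A /\ is_cesaro_limit (Madj T) B /\
    is_inverse A Ainv /\ is_inverse B Binv /\
    Madd Ainv Binv = Mscale (CofR 2) Mid.
Proof.
  intros Hpb [H0 _].
  assert (H0' : forall v, in_H0 T v -> v = V0) by (intros v Hv; apply H0; exact Hv).
  destruct T as [x y z w].
  destruct (Csqrt_ex (Cadd (Cmul (Csub x w) (Csub x w)) (Cmul (Cmul (Cmul C2 C2) y) z))) as [s Hs].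
  destruct (classic (s = C0)) as [Hs0|Hs0].
  - apply case_double; auto.
    subst s. set (D := Cmul (Cmul (Cmul C2 C2) y) z) in *.
    replace (Cmul (Csub x w) (Csub x w)) with (Csub (Cadd (Cmul (Csub x w) (Csub x w)) D) D) by ring.
    rewrite <- Hs. ring.
  - apply case_distinct with s; auto.
Qed.
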